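(* Let $E$ be a closed formula in which all bound variables are pairwise distinct, let $S$ be the (finite) set of pieces of $E$, and let $d$ be the maximum depth of nested variables in $E$. Let $T$ be the finite set of LJB-sequents whose formulas all belong to $S$, whose bracket subscripts are all of the form $V(x)$ for some variable $x$ of $E$, and whose depth is at most $d$. Then only LJB-sequents of $T$ can occur in a derivation of $\vdash E$ in LJB.
   Context: Formulas: $A ::= P(t_1,\dots,t_n)\mid A\rightarrow A\mid\forall x\,A$, with first-order terms. A formula is a tree with nodes labelled by atomic formulas, $\rightarrow$, or $\forall x$; the pieces of $E$ are the formulas associated to the positions of this tree (the subtrees, without any substitution of variables). In $E$ each bound variable $x$ labels a unique position $\forall x$; $V(x)$ is the set of variables bound in the piece $\forall x\,A$ at that position. The maximum depth of nested variables is the maximal number of nodes labelled by a quantifier $\forall$ along a single root-to-leaf path of $E$. LJB: an LJB-context is a finite multiset of items; an item is a formula or $[\Gamma]_V$ ($V$ a finite set of variables bound by the bracket, $\Gamma$ an LJB-context); $FV([\Gamma]_V)=FV(\Gamma)\setminus V$. Depth: $depth(A)=0$ for a formula, $depth([\Gamma]_V)=1+depth(\Gamma)$, $depth(\{I_1,\dots,I_n\})=\max_i depth(I_i)$; the depth of an LJB-sequent is that of its context. Cleaning rules (anywhere in a context): $[I,\Gamma]_V\longrightarrow I,[\Gamma]_V$ if $FV(I)\cap V=\emptyset$; $[\ ]_V\longrightarrow\emptyset$; $I\,I\longrightarrow I$; $\Gamma{\downarrow}$ is the normal form for a fixed strategy. LJB rules apply only to LJB-sequents with normal context in which, in each formula,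 bound variables are distinct and distinct from free variables; formulas are not identified modulo $\alpha$. Rules: (L$\rightarrow$) from $\Gamma'\vdash A_1,\dots,\Gamma'\vdash A_n$ infer $\Gamma\vdash P$, where $\Gamma=\Gamma_1,[\Gamma_2,[\dots\Gamma_{i-1},[\Gamma_i, A_1\rightarrow\dots\rightarrow A_n\rightarrow P]_{V_{i-1}}\dots]_{V_2}]_{V_1}$ ($i\ge1$), $\Gamma'=([\dots[[\Gamma_1]_{V_1},\Gamma_2]_{V_2},\dots,\Gamma_{i-1}]_{V_{i-1}},\Gamma_i,A_1\rightarrow\dots\rightarrow A_n\rightarrow P){\downarrow}$, $P$ atomic with no free variable in $V_1\cup\dots\cup V_{i-1}$; (R$\forall$) from $[\Gamma]_V{\downarrow}\vdash A$ infer $\Gamma\vdash\forall x\,A$, $V$ the set of all variables bound in $\forall x\,A$; (R$\rightarrow$) from $(\Gamma,A){\downarrow}\vdash B$ infer $\Gamma\vdash A\rightarrow B$. *)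

(* Defs.v *)
From Stdlib Require Import List Arith.
Import ListNotations.

Definition var := nat.

Inductive term : Type :=
| TVar : var -> term
| TFun : nat -> list term -> term.

Inductive formula : Type :=
| Atom : nat -> list term -> formula
| Imp : formula -> formula -> formula
| All : var -> formula -> formula.

Fixpoint tfv (t : term) : list var :=
  match t with
  | TVar x => [x]
  | TFun _ ts => (fix go (ts : list term) : list var :=
                    match ts with [] => [] | u :: us => tfv u ++ go us end) ts
  end.

Fixpoint fv (A : formula) : list var :=
  match A with
  | Atom _ ts => flat_map tfv ts
  | Imp B C => fv B ++ fv C
  | All x B => filter (fun y => negb (Nat.eqb y x)) (fv B)
  end.

Fixpoint bv (A : formula) : list var :=
  match A with
  | Atom _ _ => []
  | Imp B C => bv B ++ bv C
  | All x B => x :: bv B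
  end.

Fixpoint pieces (A : formula) : list formula :=
  A :: match A with
       | Atom _ _ => []
       | Imp B C => pieces B ++ pieces C
       | All _ B => pieces B
       end.

Fixpoint qdepth (A : formula) : nat :=
  match A with
  | Atom _ _ => 0
  | Imp B C => Nat.max (qdepth B) (qdepth C)
  | All _ B => S (qdepth B)
  end.

Definition closed (A : formula) : Prop := fv A = [].

(* V(x): the set of variables bound in the piece  forall x A  of E *)
Definition set_eq (V W : list var) : Prop := forall x, In x V <-> In x W.

Definition is_Vx (E : formula) (V : list var) : Prop :=
  exists x B, In (All x B) (pieces E) /\ set_eq V (bv (All x B)).

(* LJB contexts: finite multisets of items, represented by lists taken
   up to (recursive) permutation; bracket subscripts are finite sets of
   variables, represented by lists taken up to set equality.            *)
Inductive item : Type :=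
| IF : formula -> item
| IB : list var -> list item -> item.

Definition ctx := list item.

Inductive iequiv : item -> item -> Prop :=
| ie_form A : iequiv (IF A) (IF A)
| ie_br V W G H : set_eq V W -> cequiv G H -> iequiv (IB V G) (IB W H)
with cequiv : ctx -> ctx -> Prop :=
| ce_nil : cequiv [] []
| ce_cons I J G H : iequiv I J -> cequiv G H -> cequiv (I :: G) (J :: H)
| ce_swap I J G : cequiv (I :: J :: G) (J :: I :: G)
| ce_trans G H K : cequiv G H -> cequiv H K -> cequiv G K.

Fixpoint ifv (I : item) (x : var) : Prop :=
  match I with
  | IF A => In x (fv A)
  | IB V G => (fix go (G : ctx) : Prop :=
                 match G with [] => False | J :: G' => ifv J x \/ go G' end) G
              /\ ~ In x V
  end.

Fixpoint idepth (I : item) : nat :=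
  match I with
  | IF _ => 0
  | IB _ G => S ((fix go (G : ctx) : nat :=
                    match G with [] => 0 | J :: G' => Nat.max (idepth J) (go G') end) G)
  end.

Definition cdepth (G : ctx) : nat := fold_right (fun I n => Nat.max (idepth I) n) 0 G.

Fixpoint iforms (I : item) : list formula :=
  match I with
  | IF A => [A]
  | IB _ G => flat_map iforms G
  end.
Definition cforms (G : ctx) : list formula := flat_map iforms G.

Fixpoint isubs (I : item) : list (list var) :=
  match I with
  | IF _ => []
  | IB V G => V :: flat_map isubs G
  end.
Definition csubs (G : ctx) : list (list var) := flat_map isubs G.

Inductive clean_step : ctx -> ctx -> Prop :=
| cs_lift G1 G2 V H1 I H2 :
    (forall x, ifv I x -> ~ In x V) ->
    clean_step (G1 ++ IB V (H1 ++ I :: H2) :: G2) (G1 ++ I :: IB V (H1 ++ H2) :: G2)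
| cs_empty G1 G2 V : clean_step (G1 ++ IB V [] :: G2) (G1 ++ G2)
| cs_dup G1 G2 G3 I J :
    iequiv I J -> clean_step (G1 ++ I :: G2 ++ J :: G3) (G1 ++ I :: G2 ++ G3)
| cs_in G1 G2 V H H' :
    clean_step H H' -> clean_step (G1 ++ IB V H :: G2) (G1 ++ IB V H' :: G2).

Definition normal (G : ctx) : Prop := forall G', ~ clean_step G G'.

Inductive clean_star : ctx -> ctx -> Prop :=
| cst_refl G : clean_star G G
| cst_eq G H K : cequiv G H -> clean_star H K -> clean_star G K
| cst_step G H K : clean_step G H -> clean_star H K -> clean_star G K.

(* G |-> G↓ : the normal form computed by a fixed cleaning strategy *)
Definition strategy (nf : ctx -> ctx) : Prop :=
  forall G, clean_star G (nf G) /\ normal (nf G).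

Definition sequent : Type := (ctx * formula)%type.

Definition wf_formula (A : formula) : Prop :=
  NoDup (bv A) /\ (forall x, In x (bv A) -> ~ In x (fv A)).

Definition applicable (G : ctx) : Prop :=
  normal G /\ Forall wf_formula (cforms G).

(* Gamma_1,[Gamma_2,[ ... Gamma_{i-1},[inner]_{V_{i-1}} ... ]_{V_2}]_{V_1} *)
Fixpoint nest (layers : list (ctx * list var)) (inner : ctx) : ctx :=
  match layers with
  | [] => inner
  | (G, V) :: ls => G ++ [IB V (nest ls inner)]
  end.

(* [ ... [[Gamma_1]_{V_1}, Gamma_2]_{V_2}, ..., Gamma_{i-1}]_{V_{i-1}} *)
Definition unnest (layers : list (ctx * list var)) : ctx :=
  fold_left (fun acc '(G, V) => [IB V (acc ++ G)]) layers [].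

Definition imps (As : list formula) (P : formula) : formula := fold_right Imp P As.

Inductive rule_inst (nf : ctx -> ctx) : list sequent -> sequent -> Prop :=
| r_Limp (G : ctx) (layers : list (ctx * list var)) (Gi : ctx)
         (As : list formula) (p : nat) (ts : list term) (prems : list sequent) :
    applicable G ->
    cequiv G (nest layers (Gi ++ [IF (imps As (Atom p ts))])) ->
    (forall x, In x (fv (Atom p ts)) -> forall GV, In GV layers -> ~ In x (snd GV)) ->
    Forall2 (fun s A => cequiv (fst s)
                (nf (unnest layers ++ Gi ++ [IF (imps As (Atom p ts))])) /\ snd s = A)
            prems As ->
    rule_inst nf prems (G, Atom p ts)
| r_Rall (G : ctx) (x : var) (A : formula) (G' : ctx) :
    applicable G ->
    cequiv G' (nf [IB (bv (All x A)) G]) ->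
    rule_inst nf [(G', A)] (G, All x A)
| r_Rimp (G : ctx) (A B : formula) (G' : ctx) :
    applicable G ->
    cequiv G' (nf (G ++ [IF A])) ->
    rule_inst nf [(G', B)] (G, Imp A B).

Inductive tree : Type := Node : sequent -> list tree -> tree.

Definition root (t : tree) : sequent := match t with Node s _ => s end.

Inductive subtree : tree -> tree -> Prop :=
| sub_refl t : subtree t t
| sub_child u s ch c : In c ch -> subtree u c -> subtree u (Node s ch).

Definition valid (nf : ctx -> ctx) (t : tree) : Prop :=
  forall s ch, subtree (Node s ch) t -> rule_inst nf (map root ch) s.

Definition occurs (s : sequent) (t : tree) : Prop :=
  exists ch, subtree (Node s ch) t.

Definition inT (E : formula) (s : sequent) : Prop :=
  (forall A, In A (cforms (fst s)) \/ A = snd s -> In A (pieces E)) /\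
  (forall V, In V (csubs (fst s)) -> is_Vx E V) /\
  cdepth (fst s) <= qdepth E.

(* Main.v *)
Require Import Defs.
From Stdlib Require Import List Arith Lia Classical.
Import ListNotations.

Lemma pieces_refl A : In A (pieces A).
Proof. destruct A; simpl; auto. Qed.

Lemma pieces_trans A B C : In A (pieces B) -> In B (pieces C) -> In A (pieces C).
Proof.
  induction C; simpl; intros HA HB; destruct HB as [<-|HB]; auto; try contradiction; right;
  try (apply in_app_iff in HB as [HB|HB]; apply in_app_iff; auto); auto.
Qed.

Lemma qdepth_mono A C : In A (pieces C) -> qdepth A <= qdepth C.
Proof.
  induction C; simpl; intros [<-|H]; simpl; try lia; try contradiction.
  apply in_app_iff in H as [H|H]; [apply IHC1 in H|apply IHC2 in H]; lia.
  apply IHC in H; lia.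
Qed.

Lemma fact1 C B v : In B (pieces C) -> In v (fv B) ->
  In v (fv C) \/ exists Bv, In (All v Bv) (pieces C) /\ In B (pieces Bv).
Proof.
  induction C; simpl; intros HB Hv; destruct HB as [<-|HB]; auto; try contradiction.
  - apply in_app_iff in HB as [HB|HB].
    + destruct (IHC1 HB Hv) as [H|[Bv [H1 H2]]].
      * left; apply in_app_iff; auto.
      * right; exists Bv; split; auto; right; apply in_app_iff; auto.
    + destruct (IHC2 HB Hv) as [H|[Bv [H1 H2]]].
      * left; apply in_app_iff; auto.
      * right; exists Bv; split; auto; right; apply in_app_iff; auto.
  - destruct (IHC HB Hv) as [H|[Bv [H1 H2]]].
    + destruct (Nat.eq_dec v v0) as [->|ne].
      * right; exists C; split; auto.
      * left; apply filter_In; split; auto. apply Bool.negb_true_iff, Nat.eqb_neq; auto.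
    + right; exists Bv; split; auto.
Qed.

Lemma bv_pieces C v Bv : In (All v Bv) (pieces C) -> In v (bv C).
Proof.
  induction C; simpl; intros [H|H]; try discriminate; try contradiction.
  - apply in_app_iff in H as [H|H]; apply in_app_iff; auto.
  - injection H as -> ->; auto.
  - auto.
Qed.

Lemma bv_exists C v : In v (bv C) -> exists B, In (All v B) (pieces C).
Proof.
  induction C; simpl; intros H; try contradiction.
  - apply in_app_iff in H as [H|H]; [destruct (IHC1 H) as [B HB]|destruct (IHC2 H) as [B HB]];
      exists B; right; apply in_app_iff; auto.
  - destruct H as [->|H]; [exists C; auto|destruct (IHC H) as [B HB]; exists B; auto].
Qed.

Lemma nodup_app_disj (l1 l2 : list var) x : NoDup (l1 ++ l2) -> In x l1 -> In x l2 -> False.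
Proof.
  induction l1; simpl; intros H H1 H2; [contradiction|].
  inversion H as [|? ? Hni Hnd]; subst. destruct H1 as [->|H1].
  - apply Hni, in_app_iff; auto.
  - eauto.
Qed.

Lemma nodup_app_l (l1 l2 : list var) : NoDup (l1 ++ l2) -> NoDup l1.
Proof.
  induction l1; simpl; intros H; [constructor|inversion H as [|? ? Hni Hnd]; subst; constructor; auto].
  intro; apply Hni, in_app_iff; auto.
Qed.

Lemma nodup_app_r (l1 l2 : list var) : NoDup (l1 ++ l2) -> NoDup l2.
Proof. induction l1; simpl; intros H; auto; inversion H; auto. Qed.

Lemma unique_bind C v B1 B2 : NoDup (bv C) -> In (All v B1) (pieces C) ->
  In (All v B2) (pieces C) -> B1 = B2.
Proof.
  induction C; simpl; intros HN H1 H2.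
  - destruct H1 as [H1|H1]; [discriminate|contradiction].
  - destruct H1 as [H1|H1]; [discriminate|]. destruct H2 as [H2|H2]; [discriminate|].
    apply in_app_iff in H1 as [H1|H1]; apply in_app_iff in H2 as [H2|H2].
    + eapply IHC1; eauto using nodup_app_l.
    + exfalso; eapply nodup_app_disj; eauto using bv_pieces.
    + exfalso; eapply nodup_app_disj; eauto using bv_pieces.
    + eapply IHC2; eauto using nodup_app_r.
  - inversion HN as [|? ? H3 Hnd]; subst.
    destruct H1 as [H1|H1]; destruct H2 as [H2|H2].
    + injection H1; injection H2; intros; subst; auto.
    + injection H1; intros; subst. exfalso; apply H3; eapply bv_pieces; eauto.
    + injection H2; intros; subst. exfalso; apply H3; eapply bv_pieces; eauto.
    + eauto.
Qed.

Lemma under_all B Bv v y C : In B (pieces Bv) -> In (All v Bv) (pieces (All y C)) ->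
  In B (pieces C).
Proof.
  simpl; intros H [H'|H'].
  - injection H'; intros; subst; auto.
  - eapply pieces_trans; [|exact H']. eapply pieces_trans; [exact H|].
    simpl; right; apply pieces_refl.
Qed.

Lemma imps_pieces A As P : In A As -> In A (pieces (imps As P)).
Proof.
  induction As; simpl; intros H; [contradiction|].
  right; apply in_app_iff. destruct H as [->|H]; [left; apply pieces_refl|right; auto].
Qed.

Fixpoint item_ind' (P : item -> Prop) (hF : forall A, P (IF A))
  (hB : forall V G, (forall I, In I G -> P I) -> P (IB V G)) (I : item) : P I :=
  match I with
  | IF A => hF A
  | IB V G => hB V G
      ((fix go (G : list item) : forall J, In J G -> P J :=
          match G with
          | [] => fun J (h : In J []) => False_ind _ h
          | K :: G' => fun J h =>
              match h with
              | or_introl e => eq_ind K P (item_ind' P hF hB K) J e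
              | or_intror h' => go G' J h'
              end
          end) G)
  end.

Lemma ifv_IB V G v : ifv (IB V G) v -> (exists I, In I G /\ ifv I v) /\ ~ In v V.
Proof.
  intros [H1 H2]; split; auto. clear H2. revert H1.
  induction G; simpl; intros H1; [contradiction|].
  destruct H1 as [H1|H1]; [exists a; auto|destruct (IHG H1) as [I [? ?]]; exists I; auto].
Qed.

Lemma ifv_forms I v : ifv I v -> exists B, In B (iforms I) /\ In v (fv B).
Proof.
  revert I. refine (item_ind' _ _ _).
  - intros A H; exists A; simpl; auto.
  - intros V G IH H. apply ifv_IB in H as [[I [HI Hv]] _].
    destruct (IH I HI Hv) as [B [HB HvB]]. exists B; split; auto.
    simpl. apply in_flat_map; eauto.
Qed.

Lemma idepth_IB V G : idepth (IB V G) = S (cdepth G).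
Proof.
  induction G; simpl; auto; simpl in IHG; injection IHG as IHG; rewrite IHG; reflexivity.
Qed.

Lemma cdepth_le G n : (forall I, In I G -> idepth I <= n) -> cdepth G <= n.
Proof.
  induction G; simpl; intros H; [lia|].
  specialize (H a (or_introl eq_refl)) as Ha. specialize (IHG (fun I h => H I (or_intror h))). lia.
Qed.

Lemma normal_in G V H : normal G -> In (IB V H) G ->
  normal H /\ (forall I, In I H -> exists v, ifv I v /\ In v V).
Proof.
  intros Hn Hin. apply in_split in Hin as [G1 [G2 ->]]. split.
  - intros H' st. apply (Hn _ (cs_in G1 G2 V H H' st)).
  - intros I HI. apply in_split in HI as [H1 [H2 ->]].
    destruct (classic (exists v, ifv I v /\ In v V)) as [Hc|Hc]; auto.
    exfalso. apply (Hn (G1 ++ I :: IB V (H1 ++ H2) :: G2)).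
    apply cs_lift. intros x hx hin. apply Hc; eauto.
Qed.

Section Key.
Variable E : formula.
Hypothesis HE : closed E.
Hypothesis HN : NoDup (bv E).

Lemma key : forall D, match D with IF _ => True | IB V G =>
  normal G -> (forall I, In I G -> exists v, ifv I v /\ In v V) ->
  (forall A, In A (cforms G) -> In A (pieces E)) ->
  (forall W, In W (csubs G) -> is_Vx E W) ->
  forall x Bx, In (All x Bx) (pieces E) -> set_eq V (bv (All x Bx)) ->
  (forall B, In B (cforms G) -> In B (pieces Bx)) /\ cdepth G <= qdepth Bx end.
Proof.
  refine (item_ind' _ _ _); [intros; exact I|].
  intros V G IH Hn Hl Hf Hs x Bx HxE HV.
  assert (Hup : forall v Bv, In v V -> In (All v Bv) (pieces E) ->
            In (All v Bv) (pieces (All x Bx))).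
  { intros v Bv Hv HvE. apply HV in Hv. destruct (bv_exists _ _ Hv) as [B' HB'].
    assert (Bv = B') as ->; auto.
    eapply unique_bind; eauto. eapply pieces_trans; eauto. }
  assert (claim : forall I, In I G ->
     (forall B, In B (iforms I) -> In B (pieces Bx)) /\ idepth I <= qdepth Bx).
  { intros I HI. destruct (Hl I HI) as [v [Hvi HvV]].
    destruct I as [B | V' G'].
    - simpl in Hvi.
      assert (HBE : In B (pieces E)) by (apply Hf; apply in_flat_map; exists (IF B); simpl; auto).
      destruct (fact1 _ _ _ HBE Hvi) as [Hc|[Bv [H1 H2]]].
      + rewrite HE in Hc; contradiction.
      + split; [|simpl; lia]. simpl. intros B0 [<-|[]].
        eapply under_all; eauto.
    - destruct (normal_in _ _ _ Hn HI) as [Hn' Hl'].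
      assert (Hf' : forall A, In A (cforms G') -> In A (pieces E)).
      { intros A HA; apply Hf, in_flat_map; exists (IB V' G'); auto. }
      assert (Hs' : forall W, In W (csubs G') -> is_Vx E W).
      { intros W HW; apply Hs, in_flat_map; exists (IB V' G'); simpl; auto. }
      assert (HV' : is_Vx E V') by (apply Hs, in_flat_map; exists (IB V' G'); simpl; auto).
      destruct HV' as [x' [Bx' [Hx'E HV'e]]].
      destruct (IH _ HI Hn' Hl' Hf' Hs' x' Bx' Hx'E HV'e) as [Ha Hb].
      apply ifv_IB in Hvi as [[J [HJ HvJ]] HvV'].
      destruct (ifv_forms _ _ HvJ) as [B [HB HvB]].
      assert (HBc : In B (cforms G')) by (apply in_flat_map; eauto).
      assert (HBx' : In B (pieces (All x' Bx'))) by (simpl; right; auto).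
      assert (Hfree : In v (fv (All x' Bx'))).
      { destruct (fact1 _ _ _ HBx' HvB) as [Hc|[Bv [H1 H2]]]; auto.
        exfalso; apply HvV', HV'e; eapply bv_pieces; eauto. }
      destruct (fact1 _ _ _ Hx'E Hfree) as [Hc|[Bv [H1 H2]]].
      + rewrite HE in Hc; contradiction.
      + assert (Hx'x : In (All x' Bx') (pieces Bx)) by (eapply under_all; eauto).
        split.
        * simpl. intros B0 HB0. eapply pieces_trans; [|exact Hx'x].
          simpl; right; auto.
        * rewrite idepth_IB. apply qdepth_mono in Hx'x. simpl in Hx'x. lia. }
  split.
  - intros B HB. apply in_flat_map in HB as [I [HI HBI]]. eapply claim; eauto.
  - apply cdepth_le. intros I HI; apply claim; auto.
Qed.

Lemma top_depth G : normal G -> (forall A, In A (cforms G) -> In A (pieces E)) ->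
  (forall W, In W (csubs G) -> is_Vx E W) -> cdepth G <= qdepth E.
Proof.
  intros Hn Hf Hs. apply cdepth_le. intros [A|V H] HI; [simpl; lia|]. rewrite idepth_IB.
  destruct (normal_in _ _ _ Hn HI) as [Hn' Hl'].
  assert (Hf' : forall A, In A (cforms H) -> In A (pieces E)).
  { intros A HA; apply Hf, in_flat_map; exists (IB V H); auto. }
  assert (Hs' : forall W, In W (csubs H) -> is_Vx E W).
  { intros W HW; apply Hs, in_flat_map; exists (IB V H); simpl; auto. }
  assert (HV' : is_Vx E V) by (apply Hs, in_flat_map; exists (IB V H); simpl; auto).
  destruct HV' as [x [Bx [HxE HVe]]].
  destruct (key (IB V H) Hn' Hl' Hf' Hs' x Bx HxE HVe) as [_ Hb].
  apply qdepth_mono in HxE. simpl in HxE. lia.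
Qed.

End Key.

Scheme iequiv_mut := Induction for iequiv Sort Prop
with cequiv_mut := Induction for cequiv Sort Prop.

Definition SubI (I J : item) : Prop :=
  (forall A, In A (iforms J) -> In A (iforms I)) /\
  (forall W, In W (isubs J) -> exists V, In V (isubs I) /\ set_eq V W).
Definition SubC (G H : ctx) : Prop :=
  (forall A, In A (cforms H) -> In A (cforms G)) /\
  (forall W, In W (csubs H) -> exists V, In V (csubs G) /\ set_eq V W).

Lemma cforms_cons I G : cforms (I :: G) = iforms I ++ cforms G.
Proof. reflexivity. Qed.
Lemma csubs_cons I G : csubs (I :: G) = isubs I ++ csubs G.
Proof. reflexivity. Qed.
Lemma cforms_app G H : cforms (G ++ H) = cforms G ++ cforms H.
Proof. unfold cforms; apply flat_map_app. Qed.
Lemma csubs_app G H : csubs (G ++ H) = csubs G ++ csubs H.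
Proof. unfold csubs; apply flat_map_app. Qed.
Lemma iforms_IB V G : iforms (IB V G) = cforms G.
Proof. reflexivity. Qed.
Lemma isubs_IB V G : isubs (IB V G) = V :: csubs G.
Proof. reflexivity. Qed.

Lemma set_eq_refl V : set_eq V V.
Proof. intro; tauto. Qed.

Lemma cequiv_sym : forall G H, cequiv G H -> cequiv H G.
Proof.
  apply (cequiv_mut (fun I J _ => iequiv J I) (fun G H _ => cequiv H G)).
  - constructor.
  - intros V W G H s c H0; constructor; auto. intro y; rewrite (s y); tauto.
  - constructor.
  - intros; constructor; auto.
  - intros; apply ce_swap.
  - intros; eapply ce_trans; eauto.
Qed.

Lemma cequiv_sub : forall G H, cequiv G H -> SubC G H.
Proof.
  apply (cequiv_mut (fun I J _ => SubI I J) (fun G H _ => SubC G H)).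
  - intros A; split; auto. intros W HW; exists W; split; auto; apply set_eq_refl.
  - intros V W G H sVW c [IH1 IH2]; split.
    + rewrite !iforms_IB; auto.
    + rewrite !isubs_IB; intros W' [<-|HW'].
      * exists V; simpl; auto.
      * destruct (IH2 _ HW') as [V' [? ?]]; exists V'; simpl; auto.
  - split; simpl; [tauto|intros W []].
  - intros I J G H _ [A1 A2] _ [B1 B2]; split; rewrite ?cforms_cons, ?csubs_cons.
    + intros A HA; apply in_app_iff in HA as [HA|HA]; apply in_app_iff; auto.
    + intros W HW; apply in_app_iff in HW as [HW|HW];
        [destruct (A2 _ HW) as [V [? ?]]|destruct (B2 _ HW) as [V [? ?]]];
        exists V; rewrite in_app_iff; auto.
  - intros I J G; split; rewrite ?cforms_cons, ?csubs_cons, ?cforms_cons, ?csubs_cons.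
    + intros A HA; rewrite !in_app_iff in *; tauto.
    + intros W HW; exists W; split; [rewrite !in_app_iff in *; tauto|apply set_eq_refl].
  - intros G H K _ [A1 A2] _ [B1 B2]; split; auto.
    intros W HW. destruct (B2 _ HW) as [V [HV sV]]. destruct (A2 _ HV) as [U [HU sU]].
    exists U; split; auto. intro y; rewrite (sU y), (sV y); tauto.
Qed.

Lemma clean_sub : forall G H, clean_step G H ->
  (forall A, In A (cforms H) -> In A (cforms G)) /\
  (forall W, In W (csubs H) -> In W (csubs G)).
Proof.
  induction 1; rewrite ?cforms_app, ?csubs_app, ?cforms_cons, ?csubs_cons,
     ?iforms_IB, ?isubs_IB, ?cforms_app, ?csubs_app, ?cforms_cons, ?csubs_cons;
     simpl; rewrite ?cforms_app, ?csubs_app, ?cforms_cons, ?csubs_cons; split;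
     intros; rewrite ?in_app_iff in *; simpl in *; rewrite ?in_app_iff in *; try tauto.
  - destruct IHclean_step as [I1 I2]. intuition.
  - destruct IHclean_step as [I1 I2]. intuition.
Qed.

Section Inv.
Variable E : formula.
Definition Good (G : ctx) : Prop :=
  (forall A, In A (cforms G) -> In A (pieces E)) /\
  (forall W, In W (csubs G) -> is_Vx E W).

Lemma is_Vx_eq V W : is_Vx E V -> set_eq V W -> is_Vx E W.
Proof.
  intros [x [B [H1 H2]]] s. exists x, B; split; auto. intro y; rewrite <- (s y); auto.
Qed.

Lemma good_cequiv G H : cequiv G H -> Good G -> Good H.
Proof.
  intros c [g1 g2]. destruct (cequiv_sub _ _ c) as [s1 s2]. split; auto.
  intros W HW; destruct (s2 _ HW) as [V [HV sV]]; eapply is_Vx_eq; eauto.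
Qed.

Lemma good_star G H : clean_star G H -> Good G -> Good H.
Proof.
  induction 1; auto.
  - intros; apply IHclean_star; eapply good_cequiv; eauto.
  - intros [g1 g2]; apply IHclean_star. destruct (clean_sub _ _ H0) as [s1 s2]; split; auto.
Qed.

Lemma good_app G H : Good G -> Good H -> Good (G ++ H).
Proof.
  intros [a1 a2] [b1 b2]; split; [intros A|intros W]; rewrite ?cforms_app, ?csubs_app, in_app_iff;
  intros [?|?]; auto.
Qed.

Lemma good_nest ls inner : Good (nest ls inner) ->
  Good inner /\ forall G V, In (G, V) ls -> Good G /\ is_Vx E V.
Proof.
  induction ls as [|[G V] ls IH]; simpl; intros [g1 g2].
  - split; [split; auto|tauto].
  - rewrite cforms_app, csubs_app in *. simpl in g1, g2.
    assert (Hn : Good (nest ls inner)).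
    { split; intros; [apply g1|apply g2]; rewrite in_app_iff; simpl; rewrite ?app_nil_r; auto. }
    destruct (IH Hn) as [Hi Hl]. split; auto.
    intros G' V' [e|Hin].
    + injection e as -> ->. split; [split; intros; [apply g1|apply g2]; rewrite in_app_iff; auto|].
      apply g2; rewrite in_app_iff; simpl; auto.
    + auto.
Qed.

Lemma good_unnest ls : (forall G V, In (G, V) ls -> Good G /\ is_Vx E V) -> Good (unnest ls).
Proof.
  unfold unnest. intros H. assert (Good []) as H0 by (split; simpl; tauto).
  revert H0 H. generalize (@nil item) at 1 3 as acc.
  induction ls as [|[G V] ls IH]; simpl; intros acc Ha Hl; auto.
  apply IH; [|intros; apply Hl; auto].
  destruct (Hl G V (or_introl eq_refl)) as [[a1 a2] hv]. destruct Ha as [b1 b2].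
  split; rewrite ?cforms_cons, ?csubs_cons, ?iforms_IB, ?isubs_IB, ?cforms_app, ?csubs_app; simpl;
  intros X HX; rewrite ?app_nil_r, ?cforms_app, ?csubs_app, ?in_app_iff in HX.
  - destruct HX as [?|?]; auto.
  - destruct HX as [<-|[?|?]]; auto.
Qed.

Definition inv (s : sequent) : Prop := Good (fst s) /\ In (snd s) (pieces E).

Lemma forall2_in {A B} (R : A -> B -> Prop) l1 l2 x :
  Forall2 R l1 l2 -> In x l1 -> exists y, In y l2 /\ R x y.
Proof.
  induction 1; simpl; [tauto|]. intros [<-|h]; [exists y; auto|destruct (IHForall2 h) as [z [? ?]]; exists z; auto].
Qed.

Lemma step_inv nf ps s : strategy nf -> rule_inst nf ps s -> inv s -> forall p, In p ps -> inv p.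
Proof.
  intros Hnf r [Hg Hp] p Hin. destruct r; simpl in *.
  - destruct (forall2_in _ _ _ _ H2 Hin) as [A [HA [c e]]].
    assert (Hn := good_cequiv _ _ H0 Hg). apply good_nest in Hn as [Hi Hl].
    split; [|rewrite e; eapply pieces_trans; [apply imps_pieces; eauto|apply Hi; rewrite cforms_app; apply in_app_iff; simpl; auto]].
    apply (good_cequiv _ _ (cequiv_sym _ _ c)).
    apply (good_star _ _ (proj1 (Hnf _))).
    apply good_app; [apply good_unnest; auto|auto].
  - destruct Hin as [<-|[]]; simpl. split.
    + apply (good_cequiv _ _ (cequiv_sym _ _ H0)).
      apply (good_star _ _ (proj1 (Hnf _))).
      destruct Hg as [g1 g2]; split; simpl; rewrite ?app_nil_r; auto.
      intros W [<-|HW]; auto. exists x, A; split; auto. apply set_eq_refl.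
    + eapply pieces_trans; [|exact Hp]. simpl; right; apply pieces_refl.
  - destruct Hin as [<-|[]]; simpl. split.
    + apply (good_cequiv _ _ (cequiv_sym _ _ H0)).
      apply (good_star _ _ (proj1 (Hnf _))).
      apply good_app; auto. split; simpl; [|tauto].
      intros A0 [<-|[]]. eapply pieces_trans; [|exact Hp]. simpl; right; apply in_app_iff; left; apply pieces_refl.
    + eapply pieces_trans; [|exact Hp]. simpl; right; apply in_app_iff; right; apply pieces_refl.
Qed.

Lemma subtree_trans u v w : subtree u v -> subtree v w -> subtree u w.
Proof. intros H1 H2; induction H2; auto; econstructor; eauto. Qed.

Lemma tree_inv nf : strategy nf -> forall u t, subtree u t -> valid nf t -> inv (root t) -> inv (root u).
Proof.
  intros Hnf u t Hs; induction Hs; auto.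
  intros Hv Hi. apply IHHs.
  - intros s' ch' Hs'. apply Hv. econstructor; eauto.
  - eapply step_inv; eauto. apply Hv; constructor. apply in_map; auto.
Qed.
End Inv.

Lemma rule_app nf ps s : rule_inst nf ps s -> applicable (fst s).
Proof. destruct 1; auto. Qed.

Theorem proposition13 (E : formula) (nf : ctx -> ctx) :
  closed E -> NoDup (bv E) -> strategy nf ->
  forall t : tree, valid nf t -> root t = ([], E) ->
  forall s : sequent, occurs s t -> inT E s.
Proof.
  intros HE HN Hnf t Hv Hr s [ch Hs].
  assert (Hi : inv E (root (Node s ch))).
  { eapply tree_inv; eauto. rewrite Hr. split; simpl; [split; simpl; tauto|apply pieces_refl]. }
  simpl in Hi. destruct Hi as [[g1 g2] hp].
  assert (Ha := rule_app _ _ _ (Hv _ _ Hs)). destruct Ha as [Hn _].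
  split; [|split]; auto.
  - intros A [HA|HA]; [auto|subst A; auto].
  - apply top_depth; auto.
Qed.
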